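(* Let $p,q\geq2$ be relatively prime integers with $p\geq 2q-1$. Then $|L(p,q)\cap D_{p,q}^n|\leq q^{n+1}$ for every integer $n>0$, where $D_{p,q}^n$ is the set of words of length $n$ over $D_{p,q}$.
   Context: For an integer $n>1$, $A_n=\{0,1,\dots,n-1\}$. For every $d\in A_q$ let $k_d\in A_p$ be the unique element with $k_dq\equiv d\pmod p$, and set $D_{p,q}=\{a\in A_{pq}\mid a\equiv k_d\pmod p\text{ for some }d\in A_q\}$. Define $g_{p,q}:A_{pq}\times A_{pq}\to A_{pq}$ by writing $x=x_1q+x_0$, $y=y_1q+y_0$ with $x_0,y_0\in A_q$, $x_1,y_1\in A_p$ (uniquely), and $g_{p,q}(x,y)=x_0p+y_1$; and $F_{p,q}:A_{pq}^{\mathbb{Z}}\to A_{pq}^{\mathbb{Z}}$ by $F_{p,q}(c)(i)=g_{p,q}(g_{p,q}(c(i-1),c(i)),g_{p,q}(c(i),c(i+1)))$. $F_{p,q}$ is a bijection with inverse $F_{q,p}$ (same formulas with $p,q$ exchanged), so $F_{p,q}^n$ is defined for $n\in\mathbb{Z}$. The trace is $\mathrm{tr}_{p,q}(c)=(F_{p,q}^n(c)(1))_{n\in\mathbb{Z}}$, and $L(p,q)$ is the set of all finite words $u(1)\cdots u(m)$ over $A_{pq}$ such that for some $c\in A_{pq}^{\mathbb{Z}}$ and $n_0\in\mathbb{Z}$, $u(j)=\mathrm{tr}_{p,q}(c)(n_0+j)$ for $1\leq j\leq m$. *)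

(* Defs.v *)
From mathcomp Require Import all_boot all_order all_algebra.
From mathcomp Require Import boolp.
Set Implicit Arguments. Unset Strict Implicit. Unset Printing Implicit Defensive.
Import GRing.Theory Num.Theory.
Local Open Scope ring_scope.

(* Elements of A_{pq} are represented as natural numbers; configurations
   c : Z -> A_{pq} are functions int -> nat with all values < p*q. *)

Definition g (p q : nat) (x y : nat) : nat := ((x %% q) * p + y %/ q)%N.

Definition F (p q : nat) (c : int -> nat) : int -> nat :=
  fun i => g p q (g p q (c (i - 1)) (c i)) (g p q (c i) (c (i + 1))).

(* F_{p,q}^n for n in Z; negative powers use the inverse F_{q,p}. *)
Definition Fpow (p q : nat) (n : int) (c : int -> nat) : int -> nat :=
  match n with
  | Posz k => iter k (F p q) c
  | Negz k => iter k.+1 (F q p) c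
  end.

Definition tr (p q : nat) (c : int -> nat) (n : int) : nat := Fpow p q n c 1.

Definition inL (p q : nat) (u : seq nat) : Prop :=
  exists c : int -> nat, (forall i, (c i < p * q)%N) /\
  exists n0 : int, forall j : nat, (j < size u)%N ->
    nth 0%N u j = tr p q c (n0 + (j.+1)%:Z).

Definition inD (p q : nat) (a : nat) : bool :=
  [exists d : 'I_q, exists k : 'I_p,
     ((k * q == d %[mod p]) && (a == k %[mod p]))%N].

(* Main.v *)
Require Import Defs.
From mathcomp Require Import all_boot all_order all_algebra.
From mathcomp Require Import boolp.
From mathcomp Require Import zify.

Section Aux.

Lemma divn_uniq x d qq r : 0 < d -> x = qq * d + r -> r < d -> x %/ d = qq.
Proof. move=> d0 -> rd. by rewrite divnMDl // divn_small // addn0. Qed.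

Lemma g_lt p q x y : 0 < p -> 0 < q -> y < p * q -> g p q x y < p * q.
Proof.
move=> p0 q0 hy; rewrite /g.
have h1 := ltn_pmod x q0.
have h2 : y %/ q < p by rewrite ltn_divLR.
nia.
Qed.

Lemma gg_inv p q w x y : 0 < p -> 0 < q -> x < p * q -> y < p * q ->
  g p q (g q p w x) (g q p x y) = x.
Proof.
move=> p0 q0 hx hy; rewrite /g.
have h1 : x %/ p < q by rewrite ltn_divLR // mulnC.
have h2 : y %/ p < q by rewrite ltn_divLR // mulnC.
rewrite mulnC modnMDl (modn_small h1) divnMDl // (divn_small h2) addn0.
by rewrite mulnC -divn_eq.
Qed.

Definition bnd p q (c : int -> nat) := forall i, c i < p * q.

Lemma F_bnd p q c : 0 < p -> 0 < q -> bnd p q c -> bnd p q (F p q c).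
Proof. move=> p0 q0 hc i; rewrite /F; apply: g_lt => //; exact: g_lt. Qed.

Lemma F_bnd' p q c : 0 < p -> 0 < q -> bnd p q c -> bnd p q (F q p c).
Proof.
move=> p0 q0 hc i; rewrite mulnC; apply: F_bnd => // j; rewrite mulnC; exact: hc.
Qed.

Lemma F_inv p q c : 0 < p -> 0 < q -> bnd p q c -> forall i, F p q (F q p c) i = c i.
Proof.
move=> p0 q0 hc i.
have hz : forall j : int, g q p (c (j - 1)%R) (c j) < p * q.
  move=> j; rewrite mulnC; apply: g_lt => //; rewrite mulnC; exact: hc.
have hz' : forall j : int, g q p (c j) (c (j + 1)%R) < p * q.
  by move=> j; have := hz (j + 1)%R; rewrite GRing.addrK.
rewrite /F.
have hg : forall x y, y < p * q -> g q p x y < p * q.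
  by move=> x y hy; rewrite mulnC; apply: g_lt => //; rewrite mulnC.
rewrite GRing.subrK GRing.addrK.
by rewrite !gg_inv //; apply: hg; apply: hc.
Qed.

Lemma Fpow_bnd p q c m : 0 < p -> 0 < q -> bnd p q c -> bnd p q (Fpow p q m c).
Proof.
move=> p0 q0 hc; case: m => k /=.
  elim: k => [|k IH] //=; exact: F_bnd.
elim: k => [|k IH] /=; first exact: F_bnd'.
exact: F_bnd'.
Qed.

Lemma Fpow_step p q c m i : 0 < p -> 0 < q -> bnd p q c ->
  Fpow p q (m + 1)%R c i = F p q (Fpow p q m c) i.
Proof.
move=> p0 q0 hc; case: m => k.
  have -> : (Posz k + 1 = Posz k.+1)%R by rewrite -addn1.
  by [].
case: k => [|k].
  have -> : (Negz 0 + 1 = 0)%R by [].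
  by rewrite /= (F_inv _ _ _ p0 q0 hc).
have -> : (Negz k.+1 + 1 = Negz k)%R by lia.
have hb := Fpow_bnd p q c (Negz k) p0 q0 hc.
change (Fpow p q (Negz k) c i = F p q (F q p (Fpow p q (Negz k) c)) i).
by rewrite (F_inv _ _ _ p0 q0 hb).
Qed.

Lemma arith a0 m p q t d r1 lo : lo * q = m * p + d -> a0 * p + t = lo * q + r1 ->
  r1 < q -> t < p -> d < q -> 2 * q - 1 <= p -> m = a0.
Proof. move=> *. nia. Qed.

Definition fl p q m := (m * p + q - 1) %/ q.

Lemma DK p q lo : 0 < p -> 0 < q -> lo * q %% p < q ->
  lo = fl p q (lo * q %/ p).
Proof.
move=> p0 q0 h; rewrite /fl.
have e := divn_eq (lo * q) p.
symmetry; apply: (@divn_uniq _ _ _ (q - 1 - lo * q %% p)) => //; lia.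
Qed.

Lemma inD_mod p q a : 0 < p -> q <= p -> inD p q a -> (a %% p) * q %% p < q.
Proof.
move=> p0 qp /existsP [d /existsP [k /andP [/eqP h1 /eqP h2]]].
rewrite h2 (modn_small (ltn_ord k)) h1 modn_small; first exact: ltn_ord.
exact: leq_trans (ltn_ord d) qp.
Qed.

Lemma TR p q c : 0 < p -> 0 < q -> 2 * q - 1 <= p -> bnd p q c ->
  inD p q (F p q c 1) -> F p q c 1 %% p = fl p q (c 1 %% q).
Proof.
move=> p0 q0 hpq hc hD.
have qp : q <= p by lia.
move: hD; rewrite /F /g.
set a := c 1%R; set z := c (1 + 1)%R.
set lo := ((a %% q) * p + z %/ q) %/ q.
have ha := ltn_pmod a q0.
have hz : z %/ q < p by rewrite ltn_divLR //; exact: hc.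
have hlo : lo < p by rewrite /lo ltn_divLR //; nia.
have hmod : forall X, (X * p + lo) %% p = lo by move=> X; rewrite modnMDl modn_small.
move=> hD; have := inD_mod _ _ _ p0 qp hD; rewrite hmod => hd.
rewrite (DK _ _ _ p0 q0 hd); congr fl.
have e1 := divn_eq (lo * q) p.
have e2 := divn_eq ((a %% q) * p + z %/ q) q.
have r1 := ltn_pmod ((a %% q) * p + z %/ q) q0.
rewrite -/lo in e2.
exact: (arith _ _ _ _ _ _ _ _ e1 e2 r1 hz hd hpq).
Qed.

End Aux.

Theorem lemma6 (p q : nat) (hp : 2 <= p) (hq : 2 <= q) (hcop : coprime p q)
  (hpq : 2 * q - 1 <= p) (n : nat) (hn : 0 < n) :
  #|[set u : n.-tuple 'I_(p * q) |
      all (fun a : 'I_(p * q) => inD p q a) u &&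
      `[< inL p q (map (fun a : 'I_(p * q) => nat_of_ord a) u) >] ]| <= q ^ n.+1.
Proof.
have p0 : 0 < p by lia.
have q0 : 0 < q by lia.
have qp : q <= p by lia.
set S := [set u : n.-tuple 'I_(p * q) | _ ].
pose o0 : 'I_q := Ordinal q0.
pose s_ (u : n.-tuple 'I_(p * q)) : seq nat := map (fun a : 'I_(p * q) => nat_of_ord a) u.
pose v (u : n.-tuple 'I_(p * q)) (i : nat) : nat :=
  if i == 0 then (nth 0 (s_ u) 0 %% p) * q %/ p else nth 0 (s_ u) i.-1 %/ p.
pose phi (u : n.-tuple 'I_(p * q)) : {ffun 'I_n.+1 -> 'I_q} :=
  [ffun i : 'I_n.+1 => insubd o0 (v u i)].
have nth_lt : forall u j, nth 0 (s_ u) j < p * q.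
  move=> u j.
  have hall : all (fun x => x < p * q) (s_ u).
    by apply/allP => x /mapP [y _ ->]; exact: ltn_ord.
  case: (ltnP j (size (s_ u))) => h.
    exact: (allP hall) _ (mem_nth 0 h).
  by rewrite nth_default // muln_gt0 p0.
have vlt : forall u i, v u i < q.
  move=> u i; rewrite /v; case: ifP => _.
    rewrite ltn_divLR //; have := ltn_pmod (nth 0 (s_ u) 0) p0; nia.
  by rewrite ltn_divLR // mulnC; exact: nth_lt.
have good : forall u, u \in S ->
   (nth 0 (s_ u) 0 %% p = fl p q ((nth 0 (s_ u) 0 %% p) * q %/ p)) /\
   (forall j, j.+1 < n -> nth 0 (s_ u) j.+1 %% p = fl p q (nth 0 (s_ u) j %% q)).
  move=> u; rewrite inE => /andP [hD /asboolP [c [hc [n0 H]]]].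
  have sz : size (s_ u) = n by rewrite size_map size_tuple.
  have hD' : all (inD p q) (s_ u) by rewrite all_map.
  split.
    have h0 : inD p q (nth 0 (s_ u) 0) by apply: (all_nthP 0 hD'); rewrite sz.
    exact: (DK _ _ _ p0 q0 (inD_mod _ _ _ p0 qp h0)).
  move=> j hj.
  have hb : bnd p q c by exact: hc.
  have hj1 : inD p q (nth 0 (s_ u) j.+1) by apply: (all_nthP 0 hD'); rewrite sz.
  have eq : (n0 + (j.+2)%:Z = (n0 + (j.+1)%:Z) + 1)%R by lia.
  rewrite (H j.+1) ?sz // (H j) ?sz; last by lia.
  rewrite (H j.+1) ?sz // in hj1.
  rewrite /tr eq Fpow_step //.
  rewrite /tr eq Fpow_step // in hj1.
  apply: TR => //; exact: Fpow_bnd.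
have inj : {in S &, injective phi}.
  move=> u w uS wS /ffunP E.
  have Ev : forall i, i < n.+1 -> v u i = v w i.
    move=> i hi; have := E (Ordinal hi); rewrite !ffunE => /(congr1 val).
    by rewrite !insubdK //; apply: vlt.
  have Es : s_ u = s_ w.
    apply: (@eq_from_nth _ 0); first by rewrite !size_map !size_tuple.
    rewrite size_map size_tuple => j hj.
    elim: j hj => [|j IH] hj.
      rewrite (divn_eq (nth 0 (s_ u) 0) p) (divn_eq (nth 0 (s_ w) 0) p).
      have e0 := Ev 0 erefl.
      have e1 := Ev 1 hn.
      rewrite /v /= in e0 e1.
      rewrite e1 (good u uS).1 (good w wS).1 e0 //.
    rewrite (divn_eq (nth 0 (s_ u) j.+1) p) (divn_eq (nth 0 (s_ w) j.+1) p).
    have e1 := Ev j.+2 hj.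
    rewrite /v /= in e1.
    rewrite e1 ((good u uS).2 j hj) ((good w wS).2 j hj) IH //.
    exact: ltnW.
  by apply/val_inj/(inj_map val_inj).
rewrite -(card_in_imset inj).
apply: leq_trans (max_card _) _.
by rewrite card_ffun !card_ord.
Qed.
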